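(* Let $0<p<1$, $0\le r\le1$ with $p\ne r$, $m:=r/p>1$, $T\in\mathbb{N}$ and $k\in\mathbb{N}$. Let $(H_i)_{i\ge1}$ be i.i.d. with $\mathbb{P}(H>n)=\frac{r-p}{(1-p)m^n-(1-r)}$ for $n\ge0$, $H_0:=T$, $N_T:=\min\{i\ge1:H_i>T\}$. Define the $k$-sample node depths: conditionally on $\{N_T\ge k\}$, choose a subset of $k$ tips $s_0<s_1<\dots<s_{k-1}$ uniformly at random among the $\binom{N_T}{k}$ subsets of $\{0,\dots,N_T-1\}$ (independently of $(H_i)$ given $N_T$), and set $H_{k,0}:=T$ and $H_{k,i}:=\max\{H_{s_{i-1}+1},\dots,H_{s_i}\}$ for $1\le i<k$. For $y\in(0,1)$, define the Bernoulli$(y)$-sample node depths: take an independent copy $(\tilde H_i)_{i\ge1}$ of $(H_i)$ with $\tilde H_0:=T$, $\tilde N_T:=\min\{i\ge1:\tilde H_i>T\}$, select each tip $i\in\{0,\dots,\tilde N_T-1\}$ independently with probability $y$, let $K$ be the number of selected tips and $t_0<\dots<t_{K-1}$ the selected tips, and set $H_{y,0}:=T$, $H_{y,i}:=\max\{\tilde H_{t_{i-1}+1},\dots,\tilde H_{t_i}\}$ for $1\le i<K$. Let $$\mu_k(\mathrm{d}y):=\frac{k\,\delta_T\,y^{k-1}}{\bigl(1-(1-\delta_T)(1-y)\bigr)^{k+1}}\,\mathrm{d}y,\qquad y\in(0,1),\qquad \delta_T:=\mathbb{P}(H>T).$$ Then for all $x_0=T$ and $x_1,\dots,x_{k-1}\in\{1,2,\dots,T\}$,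 $$\mathbb{P}(H_{k,0}=x_0,\dots,H_{k,k-1}=x_{k-1}\mid N_T\ge k)=\int_0^1\mu_k(\mathrm{d}y)\,\mathbb{P}(H_{y,0}=x_0,\dots,H_{y,k-1}=x_{k-1}\mid K=k).$$
   Context: The sequence $(H_i)_{i\ge1}$ is the coalescent point process of a Bienaymé–Galton–Watson process with $(p,r)$-linear fractional offspring law $\mathbb{P}(\xi=0)=1-r$, $\mathbb{P}(\xi=k)=rp(1-p)^{k-1}$ ($k\ge1$): $H_i$ is the coalescent time of consecutive tips $i-1,i$, and the coalescent time of tips $i<j$ is $\max\{H_{i+1},\dots,H_j\}$. The CPP$(T)$ tree has tips $0,\dots,N_T-1$ with node depths $H_0=T,H_1,\dots,H_{N_T-1}$. $H_{k,i}$ (resp. $H_{y,i}$) is the coalescent time between the $(i-1)$-th and $i$-th sampled tips. $\mu_k$ is a probability measure on $(0,1)$. *)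

(* Defs.v *)
From HB Require Import structures.
From mathcomp Require Import all_boot all_order all_algebra.
From mathcomp Require Import all_classical all_reals all_analysis.
Set Implicit Arguments. Unset Strict Implicit. Unset Printing Implicit Defensive.
Import Order.TTheory GRing.Theory Num.Theory.
Local Open Scope ring_scope.

Section CPP.
Variable R : realType.

Definition tailH (p r : R) (n : nat) : R :=
  (r - p) / ((1 - p) * (r / p) ^+ n - (1 - r)).

Definition pH (p r : R) (n : nat) : R :=
  (if n is n'.+1 then tailH p r n' else 1) - tailH p r n.

(* A CPP(T) tree with N = n+1 tips is encoded by h : 'I_n -> {0..T},
   h i = H_{i+1} for 1 <= i+1 <= n = N_T - 1.  Its probability is
   P(H_1 = h_0, ..., H_n = h_{n-1}, H_{n+1} > T)
   = prod_i P(H = h_i) * P(H > T)   (i.i.d. law of (H_i)),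
   which is the probability of {N_T = n+1, (H_1..H_n) = h}. *)
Definition ptree (p r : R) (T n : nat) (h : {ffun 'I_n -> 'I_T.+1}) : R :=
  (\prod_(i < n) pH p r (h i)) * tailH p r T.

Definition hlist (T n : nat) (h : {ffun 'I_n -> 'I_T.+1}) : seq nat :=
  [seq val (h i) | i <- enum 'I_n].

(* H_j for j >= 1 (read from the list H_1 :: H_2 :: ...) *)
Definition Hat (hs : seq nat) (j : nat) : nat := nth 0 hs j.-1.

Definition tips (N : nat) (s : {set 'I_N}) : seq nat :=
  sort leq [seq val i | i <- enum s].

(* sampled node depths: for selected tips t_0 < ... < t_{K-1},
   [:: T; max(H_{t_0+1..t_1}); ...; max(H_{t_{K-2}+1..t_{K-1}})] *)
Definition depths (T : nat) (hs : seq nat) (t : seq nat) : seq nat :=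
  T :: pairmap (fun a b => \max_(a.+1 <= j < b.+1) Hat hs j) (head 0%N t) (behead t).

(* P(H_{k,0} = x_0, ..., H_{k,k-1} = x_{k-1} | N_T >= k), where given N_T = N >= k
   the k-subset of tips is uniform among the 'C(N,k) subsets. *)
Definition ksample_prob (p r : R) (T k : nat) (x : seq nat) : R :=
  (\big[+%R/0%R]_(n <oo) (if (k <= n.+1)%N then
      \sum_(h : {ffun 'I_n -> 'I_T.+1})
        ptree p r h *
        (#|[set s : {set 'I_n.+1} | (#|s| == k) && (depths T (hlist h) (tips s) == x)]|%:R
           / ('C(n.+1, k))%:R)
    else 0))
  / (\big[+%R/0%R]_(n <oo) (if (k <= n.+1)%N then
      \sum_(h : {ffun 'I_n -> 'I_T.+1}) ptree p r h else 0)).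

(* P(H_{y,0} = x_0, ..., H_{y,k-1} = x_{k-1} | K = k), each tip selected
   independently with probability y. *)
Definition bsample_prob (p r : R) (T k : nat) (y : R) (x : seq nat) : R :=
  (\big[+%R/0%R]_(n <oo)
      \sum_(h : {ffun 'I_n -> 'I_T.+1})
        ptree p r h *
        \sum_(b : {set 'I_n.+1} | (#|b| == k) && (depths T (hlist h) (tips b) == x))
           (y ^+ #|b| * (1 - y) ^+ (n.+1 - #|b|)))
  / (\big[+%R/0%R]_(n <oo)
      \sum_(h : {ffun 'I_n -> 'I_T.+1})
        ptree p r h *
        \sum_(b : {set 'I_n.+1} | #|b| == k)
           (y ^+ #|b| * (1 - y) ^+ (n.+1 - #|b|))).

Definition muk_density (p r : R) (T k : nat) (y : R) : R :=
  k%:R * tailH p r T * y ^+ k.-1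
  / (1 - (1 - tailH p r T) * (1 - y)) ^+ k.+1.

End CPP.

(* Main.v *)
Require Import Defs.
From HB Require Import structures.
From mathcomp Require Import all_boot all_order all_algebra.
From mathcomp Require Import all_classical all_reals all_analysis.
From mathcomp Require Import ring lra zify.
From mathcomp Require Import measurable_realfun.
Import Order.TTheory GRing.Theory Num.Theory.
Import numFieldNormedType.Exports.
Local Open Scope classical_set_scope.
Local Open Scope ring_scope.

Section Tail.
Variable R : realType.
Variables p r : R.
Hypothesis hp0 : 0 < p.
Hypothesis hp1 : p < 1.
Hypothesis hm : 1 < r / p.

Let dd (n : nat) : R := (1 - p) * (r / p) ^+ n - (1 - r).

Lemma rp_gt0 : 0 < r - p.
Proof.
have : p * 1 < p * (r / p) by rewrite ltr_pM2l.
by rewrite mulr1 mulrCA divff ?gt_eqF // mulr1 subr_gt0.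
Qed.

Lemma dd_ge n : r - p <= dd n.
Proof.
rewrite /dd; have h : 1 <= (r / p) ^+ n by rewrite exprn_ege1 // ltW.
have : (1 - p) * 1 <= (1 - p) * (r / p) ^+ n by rewrite ler_wpM2l // subr_ge0 ltW.
rewrite mulr1 => h2; rewrite lerBrDr; lra.
Qed.

Lemma dd_mono n : dd n <= dd n.+1.
Proof.
rewrite /dd lerD2r exprS; apply: ler_wpM2l; first by rewrite subr_ge0 ltW.
rewrite -[X in X <= _]mul1r; apply: ler_wpM2r; last exact: ltW.
by rewrite exprn_ge0 // ltW // (lt_trans ltr01).
Qed.

Lemma dd_gt1 : dd 0 < dd 1.
Proof.
rewrite /dd expr0 expr1 ltrD2r.
have : (1 - p) * 1 < (1 - p) * (r / p) by rewrite ltr_pM2l // subr_gt0.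
by rewrite mulr1.
Qed.

Lemma tailE n : tailH p r n = (r - p) / dd n.
Proof. by []. Qed.

Lemma tail_gt0 n : 0 < tailH p r n.
Proof. rewrite tailE divr_gt0 ?rp_gt0 //; exact: lt_le_trans rp_gt0 (dd_ge n). Qed.

Lemma tail_dec n : tailH p r n.+1 <= tailH p r n.
Proof.
rewrite !tailE ler_pM2l ?rp_gt0 // lef_pV2 ?posrE ?dd_mono //;
  exact: lt_le_trans rp_gt0 (dd_ge _).
Qed.

Lemma tail0 : tailH p r 0 = 1.
Proof.
rewrite tailE /dd expr0 mulr1 (_ : 1 - p - (1 - r) = r - p) ?divff //.
  by rewrite gt_eqF // rp_gt0.
by rewrite opprB addrA; ring.
Qed.

Lemma tail_decn m n : (m <= n)%N -> tailH p r n <= tailH p r m.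
Proof.
move=> /subnK <-; elim: (n - m)%N => [|j IH] //.
by rewrite addSn; apply: le_trans IH; apply: tail_dec.
Qed.

Lemma tail_le1 n : tailH p r n <= 1.
Proof. by rewrite -tail0 tail_decn. Qed.

Lemma tail_lt1 n : (0 < n)%N -> tailH p r n < 1.
Proof.
move=> n0; apply: le_lt_trans (@tail_decn 1 n n0) _.
rewrite -tail0 !tailE ltr_pM2l ?rp_gt0 // ltf_pV2 ?posrE ?dd_gt1 //;
  exact: lt_le_trans rp_gt0 (dd_ge _).
Qed.

Lemma pH_ge0 n : 0 <= pH p r n.
Proof.
case: n => [|n]; rewrite /pH subr_ge0; first by rewrite tail_le1.
exact: tail_dec.
Qed.

Lemma sum_pH M : \sum_(j < M.+1) pH p r j = 1 - tailH p r M.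
Proof.
elim: M => [|M IH]; first by rewrite big_ord1.
by rewrite big_ord_recr /= IH /pH addrA subrK.
Qed.

End Tail.

Section NB.
Variable R : realType.

Lemma series_ge0_mono (u : R ^nat) : (forall n, 0 <= u n) ->
  {homo series u : n m / (n <= m)%N >-> n <= m}.
Proof.
move=> u0 m n mn; rewrite /series /=.
rewrite -(subnKC mn) {2}/index_iota subn0 iotaD big_cat /=.
by rewrite add0n -{2}(subn0 m) -/(index_iota _ _) lerDl sumr_ge0.
Qed.

Lemma NB_series (z : R) k : 0 <= z -> z < 1 ->
  series (fun N => ('C(N, k))%:R * z ^+ (N - k)) @ \oo --> (((1 - z) ^+ k.+1)^-1 : R).
Proof.
move=> z0 z1; elim: k => [|k IH].
  have -> : (fun N => ('C(N, 0))%:R * z ^+ (N - 0)) = geometric 1 z.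
    by apply/funext => N; rewrite bin0 subn0.
  rewrite expr1 -[X in _ --> X]mul1r.
  by apply: cvg_geometric_series; rewrite ger0_norm.
set w := fun N => _.
set wk := fun N => ('C(N, k))%:R * z ^+ (N - k).
have w0 : forall N, 0 <= w N by move=> N; rewrite /w mulr_ge0 // exprn_ge0.
have wk0 : forall N, 0 <= wk N by move=> N; rewrite /wk mulr_ge0 // exprn_ge0.
have rec : forall M, series w M.+1 = z * series w M + series wk M.
  move=> M; rewrite /series /= big_nat_recl // {1}/w bin0n mul0r add0r.
  rewrite big_distrr /= -big_split /=; apply: eq_bigr => N _.
  rewrite /w /wk binS natrD mulrDl subSS; congr (_ + _).
  case: (ltnP N k.+1) => hN; first by rewrite bin_small // !mul0r mulr0.
  idtac.
  by rewrite mulrCA -exprS subnSK.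
have mono := @series_ge0_mono w w0.
have monok := @series_ge0_mono wk wk0.
have cvk : cvgn (series wk) by apply/cvg_ex; exists (((1 - z) ^+ k.+1)^-1).
have lek : forall M, series wk M <= limn (series wk).
  by move=> M; apply: nondecreasing_cvgn_le.
have z1' : 0 < 1 - z by rewrite subr_gt0.
have cv : cvgn (series w).
  apply: nondecreasing_is_cvgn => //.
  exists (limn (series wk) / (1 - z)) => _ [M _ <-].
  rewrite ler_pdivlMr //.
  have := mono M M.+1 (leqnSn M); rewrite rec => h.
  have := lek M; nra.
have E1 : (fun M => series w M.+1) @ \oo --> limn (series w).
  by rewrite (cvg_shiftS (series w)).
have E2 : (fun M => series w M.+1) @ \oo --> z * limn (series w) + limn (series wk).
  rewrite (_ : (fun M => _) = (fun M => z * series w M + series wk M)); last first.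
    by apply/funext => M; rewrite rec.
  by apply: cvgD => //; apply: cvgMr.
have E : limn (series w) = z * limn (series w) + limn (series wk).
  by apply: (cvg_unique _ E1 E2).

have Lk : limn (series wk) = ((1 - z) ^+ k.+1)^-1 by apply: cvg_lim.
have L : limn (series w) = ((1 - z) ^+ k.+2)^-1.
  move: E; rewrite Lk => E.
  have -> : limn (series w) = ((1 - z) ^+ k.+1)^-1 / (1 - z).
    have h : limn (series w) * (1 - z) = ((1 - z) ^+ k.+1)^-1.
      by rewrite mulrBr mulr1 {1}E; ring.
    by rewrite -h mulfK // lt0r_neq0.
  by rewrite [in RHS]exprS invfM mulrC.
by rewrite -L.
Qed.

Lemma geom_tail (q : R) k : 0 <= q -> q < 1 ->
  series (fun n => if (k <= n.+1)%N then q ^+ n * (1 - q) else 0) @ \oo --> q ^+ k.-1.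
Proof.
move=> q0 q1; set f := fun n => _.
have E : forall M, series f M = q ^+ k.-1 - q ^+ (maxn M k.-1).
  elim=> [|M IH]; first by rewrite /series /= big_geq // max0n subrr.
  rewrite seriesSr IH /f; case: ifPn => hk.
    have h1 : maxn M k.-1 = M by clear -hk; lia.
    have h2 : maxn M.+1 k.-1 = M.+1 by clear -hk; lia.
    by rewrite h1 h2 exprS; ring.
  have h1 : maxn M k.-1 = k.-1 by clear -hk; lia.
  have h2 : maxn M.+1 k.-1 = k.-1 by clear -hk; lia.
  by rewrite h1 h2 addr0.
rewrite -(cvg_shiftn k.-1).
have -> : (fun n => series f (n + k.-1)%N) = (fun n => q ^+ k.-1 - q ^+ k.-1 * q ^+ n).
  apply/funext => n; rewrite E; congr (_ - _).
  rewrite (_ : maxn _ _ = (n + k.-1)%N); first by rewrite exprD mulrC.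
  by apply/maxn_idPl; rewrite leq_addl.
suff H : (fun n => q ^+ k.-1 - q ^+ k.-1 * q ^+ n) @ \oo --> (q ^+ k.-1 - q ^+ k.-1 * 0 : R).
  by rewrite mulr0 subr0 in H.
apply: cvgB; first exact: cvg_cst.
by apply: cvgMr; apply: cvg_expr; rewrite ger0_norm.
Qed.

Lemma nneseries_EFin (u : R ^nat) : cvgn (series u) ->
  (\sum_(n <oo) (u n)%:E)%E = (limn (series u))%:E.
Proof.
move=> cu; rewrite -EFin_lim //; congr (limn _); apply/funext => N /=.
by rewrite sumEFin /series /= big_mkord.
Qed.

End NB.

Section Main.
Variable R : realType.
Variables (p r : R) (T k : nat) (x : seq nat).
Hypothesis hp0 : 0 < p.
Hypothesis hp1 : p < 1.
Hypothesis hm : 1 < r / p.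
Hypothesis hk : (1 <= k)%N.
Hypothesis hT : (1 < k)%N -> (0 < T)%N.

Local Notation dl := (tailH p r T).
Local Notation q := (1 - tailH p r T).
Local Notation S n h := ([set s : {set 'I_n.+1} | (#|s| == k) && (depths T (hlist h) (tips s) == x)])%SET.

Lemma dl_gt0 : 0 < dl. Proof. exact: tail_gt0. Qed.
Lemma q_ge0 : 0 <= q. Proof. by rewrite subr_ge0; apply: tail_le1. Qed.
Lemma q_lt1 : q < 1. Proof. by rewrite ltrBlDr ltrDl dl_gt0. Qed.
Lemma qk_gt0 : 0 < q ^+ k.-1.
Proof.
case: k hk hT => [//|[|k']] _ hT'; first by rewrite expr0.
by apply: exprn_gt0; rewrite subr_gt0; apply: tail_lt1 => //; apply: hT'.
Qed.
Lemma dlq : dl = 1 - q. Proof. by rewrite opprB addrC subrK. Qed.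

Lemma ptree_ge0 n (h : {ffun 'I_n -> 'I_T.+1}) : 0 <= ptree p r h.
Proof.
rewrite /ptree mulr_ge0 ?(ltW dl_gt0) //; apply: prodr_ge0 => i _; exact: pH_ge0.
Qed.

Lemma sum_ptree n : \sum_(h : {ffun 'I_n -> 'I_T.+1}) ptree p r h = q ^+ n * dl.
Proof.
rewrite /ptree -big_distrl /=; congr (_ * _).
have := bigA_distr_bigA (fun (i : 'I_n) (j : 'I_T.+1) => pH p r j) => /= <-.
by rewrite prodr_const card_ord sum_pH.
Qed.

Lemma card_S n (h : {ffun 'I_n -> 'I_T.+1}) : (#|S n h| <= 'C(n.+1, k))%N.
Proof.
have := card_draws ('I_n.+1) k; rewrite card_ord => <-.
by apply/subset_leq_card/fintype.subsetP => s; rewrite !inE => /andP[-> _].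
Qed.

Definition cc n := \sum_(h : {ffun 'I_n -> 'I_T.+1}) ptree p r h * (#|S n h|)%:R.

Lemma cc_ge0 n : 0 <= cc n.
Proof. by apply: sumr_ge0 => h _; rewrite mulr_ge0 ?ptree_ge0. Qed.

Lemma cc_le n : cc n <= ('C(n.+1, k))%:R * (q ^+ n * dl).
Proof.
rewrite -sum_ptree big_distrr /=; apply: ler_sum => h _.
by rewrite mulrC ler_wpM2r ?ptree_ge0 // ler_nat card_S.
Qed.

Lemma cc_small n : (n.+1 < k)%N -> cc n = 0.
Proof.
move=> hn; apply/le_anti; rewrite cc_ge0 andbT.
by have := cc_le n; rewrite bin_small // mul0r.
Qed.

Definition aa n := if (k <= n.+1)%N then cc n / ('C(n.+1, k))%:R else 0.
Definition PP n := if (k <= n.+1)%N then q ^+ n * (1 - q) else 0.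

Lemma aa_ge0 n : 0 <= aa n.
Proof. by rewrite /aa; case: ifP => // _; rewrite divr_ge0 ?cc_ge0. Qed.

Lemma aa_le n : aa n <= PP n.
Proof.
rewrite /aa /PP; case: ifP => // hn.
rewrite ler_pdivrMr ?ltr0n ?bin_gt0 // mulrC -dlq; exact: cc_le.
Qed.

Lemma PP_cvg : series PP @ \oo --> q ^+ k.-1.
Proof. apply: geom_tail; [exact: q_ge0 | exact: q_lt1]. Qed.

Lemma aa_cvg : cvgn (series aa).
Proof.
apply: (series_le_cvg aa_ge0 _ aa_le); last by apply/cvg_ex; exists (q ^+ k.-1); exact: PP_cvg.
move=> n; rewrite /PP; case: ifP => // _; rewrite mulr_ge0 ?exprn_ge0 ?q_ge0 //.
by rewrite -dlq ltW // dl_gt0.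
Qed.

Lemma ksample_eq : ksample_prob p r T k x = limn (series aa) / q ^+ k.-1.
Proof.
rewrite /ksample_prob; congr (_ / _).
  congr (limn _); apply/funext => N; rewrite /series /= big_mkord.
  apply: eq_bigr => n _; rewrite /aa; case: ifP => // _.
  by rewrite /cc big_distrl /=; apply: eq_bigr => h _; rewrite mulrA.
transitivity (limn (series PP)); last by apply: cvg_lim => //; exact: PP_cvg.
congr (limn _); apply/funext => N; rewrite /series /= big_mkord.
by apply: eq_bigr => n _; rewrite /PP; case: ifP => // _; rewrite sum_ptree -dlq.
Qed.


Definition uu (y : R) n := cc n * (y ^+ k * (1 - y) ^+ (n.+1 - k)).
Definition vv (y : R) n := (q ^+ n * dl) * (('C(n.+1, k))%:R * (y ^+ k * (1 - y) ^+ (n.+1 - k))).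
Local Notation zz y := (q * (1 - y)).

Lemma vv_eq y n : vv y n = (dl * y ^+ k * q ^+ k.-1) * (('C(n.+1, k))%:R * (zz y) ^+ (n.+1 - k)).
Proof.
rewrite /vv; case: (ltnP n.+1 k) => hn; first by rewrite bin_small // !mul0r !mulr0.
rewrite exprMn.
have -> : q ^+ n = q ^+ k.-1 * q ^+ (n.+1 - k) by rewrite -exprD; congr (_ ^+ _); clear -hn hk; lia.
ring.
Qed.

Lemma vv_cvg y : 0 < y -> y < 1 ->
  series (vv y) @ \oo --> (dl * y ^+ k * q ^+ k.-1 * ((1 - zz y) ^+ k.+1)^-1 : R).
Proof.
move=> y0 y1.
have z0 : 0 <= zz y by rewrite mulr_ge0 ?q_ge0 // subr_ge0 ltW.
have z1 : zz y < 1.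
  apply: le_lt_trans (_ : 1 - y < 1); last by rewrite ltrBlDr ltrDl.
  by rewrite ler_piMl ?subr_ge0 ?(ltW y1) // ltW // q_lt1.
have := @NB_series _ (zz y) k z0 z1; rewrite -(cvg_shiftS) => H.
have -> : series (vv y) = fun n => (dl * y ^+ k * q ^+ k.-1) *
    series (fun N => ('C(N, k))%:R * (zz y) ^+ (N - k)) n.+1.
  apply/funext => n; rewrite /series /= big_nat_recl // (@bin_small 0 k) //.
  rewrite mul0r add0r big_distrr /=; apply: eq_bigr => i _; exact: vv_eq.
exact: cvgMr.
Qed.

Lemma uu_ge0 y n : 0 <= y -> y <= 1 -> 0 <= uu y n.
Proof. by move=> y0 y1; rewrite /uu mulr_ge0 ?cc_ge0 // mulr_ge0 ?exprn_ge0 // subr_ge0. Qed.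

Lemma uu_cvg y : 0 < y -> y < 1 -> cvgn (series (uu y)).
Proof.
move=> y0 y1.
apply: (@series_le_cvg _ _ (vv y)).
- by move=> n; apply: uu_ge0; apply: ltW.
- move=> n; rewrite /vv; apply: mulr_ge0.
    by apply: mulr_ge0; [apply: exprn_ge0; exact: q_ge0 | exact: ltW dl_gt0].
  apply: mulr_ge0 => //; apply: mulr_ge0; apply: exprn_ge0; first exact: ltW.
  by rewrite subr_ge0 ltW.
- move=> n; rewrite /uu /vv.
  have X0 : 0 <= y ^+ k * (1 - y) ^+ (n.+1 - k).
    by rewrite mulr_ge0 ?exprn_ge0 ?(ltW y0) ?subr_ge0 ?(ltW y1).
  have := ler_wpM2r X0 (cc_le n); move/le_trans; apply.
  by rewrite le_eqVlt; apply/orP; left; apply/eqP; ring.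
- by apply/cvg_ex; eexists; exact: vv_cvg.
Qed.

Lemma bsample_eq y : bsample_prob p r T k y x = limn (series (uu y)) / limn (series (vv y)).
Proof.
rewrite /bsample_prob; congr (_ / _).
  congr (limn _); apply/funext => N; rewrite /series /= big_mkord.
  apply: eq_bigr => n _; rewrite /uu /cc big_distrl /=; apply: eq_bigr => h _.
  rewrite -mulrA; congr (_ * _).
  rewrite (eq_bigl (fun b => b \in S n h)); last by move=> b; rewrite inE.
  rewrite (eq_bigr (fun _ => y ^+ k * (1 - y) ^+ (n.+1 - k))); last first.
    by move=> b; rewrite inE => /andP[/eqP -> _].
  by rewrite sumr_const mulr_natl.
congr (limn _); apply/funext => N; rewrite /series /= big_mkord.
apply: eq_bigr => n _; rewrite /vv -sum_ptree big_distrl /=; apply: eq_bigr => h _.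
congr (_ * _).
rewrite (eq_bigl (fun b => b \in [set b : {set 'I_n.+1} | #|b| == k]%SET)); last by move=> b; rewrite inE.
rewrite (eq_bigr (fun _ => y ^+ k * (1 - y) ^+ (n.+1 - k))); last first.
  by move=> b; rewrite inE => /eqP ->.
by rewrite sumr_const card_draws card_ord mulr_natl.
Qed.


Lemma alg1 (K d Q y D L w : R) : d != 0 -> Q != 0 -> y != 0 -> D != 0 -> w != 0 ->
  K * d * w / D * (L / (d * (y * w) * Q * D^-1)) = K / Q / y * L.
Proof. by move=> hd hQ hy hD hw; field; rewrite hd hQ hy hD hw. Qed.

Lemma XMonemXE a b (y : R) : XMonemX a b y = y ^+ a * (1 - y) ^+ b.
Proof. by []. Qed.

Definition gg n (y : R) := k%:R / q ^+ k.-1 * cc n * XMonemX k.-1 (n.+1 - k) y.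

Lemma yk (y : R) : y ^+ k = y * y ^+ k.-1.
Proof. by rewrite -exprS prednK. Qed.

Lemma integrand_eq (y : R) : 0 < y -> y < 1 ->
  (muk_density p r T k y * bsample_prob p r T k y x)%:E = (\sum_(n <oo) (gg n y)%:E)%E.
Proof.
move=> y0 y1.
have z1 : q * (1 - y) < 1.
  apply: le_lt_trans (_ : 1 - y < 1); last by rewrite ltrBlDr ltrDl.
  by rewrite ler_piMl ?subr_ge0 ?(ltW y1) // ltW // q_lt1.
have Lv : limn (series (vv y)) = dl * y ^+ k * q ^+ k.-1 * ((1 - q * (1 - y)) ^+ k.+1)^-1.
  by apply: cvg_lim => //; exact: (vv_cvg y y0 y1).
rewrite bsample_eq Lv.
transitivity ((k%:R / q ^+ k.-1 / y)%:E * (limn (series (uu y)))%:E)%E.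
  rewrite -EFinM /muk_density yk; congr (_%:E); apply: alg1.
  - by rewrite gt_eqF // dl_gt0.
  - by rewrite gt_eqF // qk_gt0.
  - by rewrite gt_eqF.
  - by rewrite expf_neq0 // gt_eqF // subr_gt0.
  - by rewrite expf_neq0 // gt_eqF.
have E : series (fun n => gg n y) = fun N => (k%:R / q ^+ k.-1 / y) * series (uu y) N.
  apply/funext => N; rewrite /series /= big_distrr /=; apply: eq_bigr => n _.
  rewrite /gg /uu XMonemXE yk.
  have yn : y != 0 by rewrite gt_eqF.
  have Qn : q ^+ k.-1 != 0 by rewrite gt_eqF // qk_gt0.
  by field; rewrite ?yn ?Qn.
have H : (fun N => (k%:R / q ^+ k.-1 / y) * series (uu y) N) @ \oo -->
    (k%:R / q ^+ k.-1 / y) * limn (series (uu y)).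
  by apply: cvgMr; exact: (uu_cvg y y0 y1).
rewrite (@nneseries_EFin _ (fun n => gg n y)); last first.
  by rewrite E; apply/cvg_ex; eexists; exact: H.
by rewrite -EFinM E; congr (_%:E); symmetry; apply: cvg_lim.
Qed.


Lemma int_XMonemX a b :
  (\int[lebesgue_measure]_(y in `]0%R, 1%R[) (XMonemX a b y)%:E)%E = (@beta_fun R a.+1 b.+1)%:E.
Proof.
rewrite integral_itv_obnd_cbnd; last by apply/measurable_EFinP; exact: measurable_XMonemX.
rewrite integral_itv_bndo_bndc; last by apply/measurable_EFinP; exact: measurable_XMonemX.
by rewrite EFin_beta_fun /= integral_XMonemX_restrict setTI.
Qed.

Lemma int_gg n :
  (\int[lebesgue_measure]_(y in `]0%R, 1%R[) (gg n y)%:E)%E =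
  (k%:R / q ^+ k.-1 * cc n * @beta_fun R k (n.+1 - k).+1)%:E.
Proof.
under eq_integral => y _ do rewrite /gg EFinM.
rewrite ge0_integralZl //.
- by rewrite int_XMonemX prednK // -EFinM.
- by apply/measurable_EFinP; exact: measurable_XMonemX.
- move=> y; rewrite /= in_itv /= => /andP[y0 y1]; rewrite lee_fin XMonemXE.
  by rewrite mulr_ge0 // exprn_ge0 // ?subr_ge0 ltW.
- rewrite lee_fin; apply: mulr_ge0; last exact: cc_ge0.
  by apply: divr_ge0 => //; exact: ltW qk_gt0.
Qed.


Lemma term_eq n : k%:R / q ^+ k.-1 * cc n * @beta_fun R k (n.+1 - k).+1 = (q ^+ k.-1)^-1 * aa n.
Proof.
rewrite /aa; case: ifP => hn; last first.
  by rewrite cc_small ?mulr0 ?mul0r // ltnNge hn.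
rewrite -[X in beta_fun X _](prednK hk) beta_fun_fact.
have e1 : (k.-1 + (n.+1 - k)).+1 = n.+1 by clear -hn hk; lia.
rewrite e1 -(bin_fact hn).
have fk : (k`! = k * k.-1`!)%N by rewrite -{1}(prednK hk) factS prednK.
rewrite fk !natrM.
have Qn : q ^+ k.-1 != 0 by rewrite gt_eqF // qk_gt0.
have Cn : ('C(n.+1, k))%:R != 0 :> R by rewrite pnatr_eq0 -lt0n bin_gt0.
have kn : k%:R != 0 :> R by rewrite pnatr_eq0 -lt0n.
have f1 : (k.-1`!)%:R != 0 :> R by rewrite pnatr_eq0 -lt0n fact_gt0.
have f2 : ((n.+1 - k)`!)%:R != 0 :> R by rewrite pnatr_eq0 -lt0n fact_gt0.
by field; rewrite ?Qn ?Cn ?kn ?f1 ?f2.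
Qed.

Lemma main_eq :
  ((ksample_prob p r T k x)%:E =
   \int[lebesgue_measure]_(y in `]0%R, 1%R[)
      (muk_density p r T k y * bsample_prob p r T k y x)%:E)%E.
Proof.
symmetry.
transitivity (\int[lebesgue_measure]_(y in `]0%R, 1%R[) (\sum_(n <oo) (gg n y)%:E))%E.
  apply: eq_integral => y; rewrite inE /= in_itv /= => /andP[y0 y1].
  exact: integrand_eq.
rewrite integral_nneseries //; last 2 first.
- by move=> n; apply/measurable_EFinP; apply: measurable_funM => //; exact: measurable_XMonemX.
- move=> n y; rewrite /= in_itv /= => /andP[y0 y1]; rewrite lee_fin /gg XMonemXE.
  apply: mulr_ge0; last by rewrite mulr_ge0 // exprn_ge0 // ?subr_ge0 ltW.
  apply: mulr_ge0; last exact: cc_ge0.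
  by apply: divr_ge0 => //; exact: ltW qk_gt0.
have E : series (fun n => (q ^+ k.-1)^-1 * aa n) = fun N => (q ^+ k.-1)^-1 * series aa N.
  by apply/funext => N; rewrite /series /= big_distrr.
have H : (fun N => (q ^+ k.-1)^-1 * series aa N) @ \oo --> (q ^+ k.-1)^-1 * limn (series aa).
  by apply: cvgMr; exact: aa_cvg.
transitivity (\sum_(n <oo) ((q ^+ k.-1)^-1 * aa n)%:E)%E.
  by congr (limn _); apply/funext => N; apply: eq_bigr => n _; rewrite int_gg term_eq.
rewrite nneseries_EFin; last by rewrite E; apply/cvg_ex; eexists; exact: H.
rewrite ksample_eq E mulrC; congr (_%:E); apply: cvg_lim => //.
Qed.

End Main.

Theorem theorem2p8 (R : realType) (p r : R) (T k : nat) (x : seq nat) :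
  0 < p < 1 -> 0 <= r <= 1 -> p != r -> 1 < r / p ->
  (1 <= k)%N ->
  size x = k -> nth 0%N x 0 = T ->
  (forall i, (0 < i < k)%N -> (1 <= nth 0%N x i <= T)%N) ->
  ((ksample_prob p r T k x)%:E =
   \int[lebesgue_measure]_(y in `]0%R, 1%R[)
      (muk_density p r T k y * bsample_prob p r T k y x)%:E)%E.
Proof.
move=> /andP[hp0 hp1] _ _ hm hk _ _ hx.
have hT : (1 < k)%N -> (0 < T)%N.
  move=> k1; have /andP[h1 h2] := hx 1%N (ltac:(by rewrite /= k1)).
  exact: leq_trans h1 h2.
exact: main_eq.
Qed.
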